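(* Let $X,Y$ be finite nonempty sets. Every $A\in\{-1,1\}^{X\times Y}$ satisfies $\|A\|_{\gamma_2}\ge\sqrt{\operatorname{Ldim}(A)}$.
   Context: The $\gamma_2$ factorization norm of a matrix $A$ is $\|A\|_{\gamma_2}=\min_{UV=A}\|U\|_{\mathrm{row}}\|V\|_{\mathrm{col}}$, where the minimum is over all factorizations $A=UV$, $\|U\|_{\mathrm{row}}$ is the largest Euclidean norm of a row of $U$ and $\|V\|_{\mathrm{col}}$ the largest Euclidean norm of a column of $V$. A mistake tree of depth $d$ over $X$ is a complete binary tree of depth $d$ in which each internal node $\nu$ is labelled with $x(\nu)\in X$ and each edge $e$ to a child is labelled with a sign $\sigma(e)\in\{-1,1\}$ ($-1$ for the left child, $+1$ for the right child). $A\in\{-1,1\}^{X\times Y}$ shatters such a tree if for every root-to-leaf path $(\nu_1,\dots,\nu_{d+1})$ there is $y\in Y$ with $A(x(\nu_i),y)=\sigma(\nu_i\nu_{i+1})$ for all $i\in[d]$. The Littlestone dimension $\operatorname{Ldim}(A)$ is the largest $d$ for which $A$ shatters a mistake tree of depth $d$. *)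

(* Defs.v *)
From HB Require Import structures.
From mathcomp Require Import all_boot all_order all_algebra.
From mathcomp Require Import boolp classical_sets reals.
Set Implicit Arguments. Unset Strict Implicit. Unset Printing Implicit Defensive.
Import Order.TTheory GRing.Theory Num.Theory.
Local Open Scope ring_scope.
Local Open Scope classical_set_scope.

Section Defs.
Variables (R : realType) (X Y : finType).

Definition row_norm_max (k : nat) (U : X -> 'I_k -> R) : R :=
  \big[Num.max/0]_(x : X) Num.sqrt (\sum_(i < k) U x i ^+ 2).

Definition col_norm_max (k : nat) (V : 'I_k -> Y -> R) : R :=
  \big[Num.max/0]_(y : Y) Num.sqrt (\sum_(i < k) V i y ^+ 2).

Definition gamma2 (A : X -> Y -> R) : R :=
  inf [set r : R | exists (k : nat) (U : X -> 'I_k -> R) (V : 'I_k -> Y -> R),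
        (forall x y, A x y = \sum_(i < k) U x i * V i y) /\
        r = row_norm_max U * col_norm_max V].

(* Mistake trees of depth d: a node of depth i is the sequence (of length i)
   of edge signs on the path from the root (false = -1 = left child,
   true = +1 = right child); [lbl] labels the internal nodes
   (sequences of length < d) by elements of X. *)
Definition sign_of (b : bool) : R := if b then 1 else -1.

Definition shatters (A : X -> Y -> R) (d : nat) (lbl : seq bool -> X) : Prop :=
  forall s : seq bool, size s = d ->
    exists y : Y, forall i : nat, (i < d)%N ->
      A (lbl (take i s)) y = sign_of (nth false s i).

Definition shatters_depth (A : X -> Y -> R) (d : nat) : Prop :=
  exists lbl : seq bool -> X, shatters A d lbl.

(* Shattered depths d
   satisfy 2^d <= #|Y| (distinct leaves need distinct y's), so d <= #|Y|
   and the maximum over d <= #|Y| is the maximum over all d. *)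
Definition Ldim (A : X -> Y -> R) : nat :=
  \max_(d < #|Y|.+1 | `[< shatters_depth A d >]) d.

End Defs.

(* Main.v *)
Require Import Defs.
From HB Require Import structures.
From mathcomp Require Import all_boot all_order all_algebra.
From mathcomp Require Import boolp classical_sets reals.
From mathcomp Require Import ring lra.
Import Order.TTheory GRing.Theory Num.Theory.
Local Open Scope ring_scope.
Set Implicit Arguments. Unset Strict Implicit.

Section Aux.
Variable R : realType.

Definition dotp (k : nat) (a b : 'I_k -> R) : R := \sum_i a i * b i.

Lemma CS (k : nat) (a b : 'I_k -> R) :
  dotp a b ^+ 2 <= dotp a a * dotp b b.
Proof.
set B := dotp b b; set S := dotp a b; set A := dotp a a.
have HB0 : 0 <= B by apply: sumr_ge0 => i _; rewrite -expr2 sqr_ge0.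
have [B0|Bpos] := eqVneq B 0.
  have bz : forall i, b i = 0.
    move=> i; have h := @psumr_eq0P R _ predT (fun i => b i * b i).
    have := h (fun j _ => ltac:(rewrite -expr2 sqr_ge0 //)) B0 i isT.
    by move/eqP; rewrite mulf_eq0 orbb => /eqP.
  have -> : S = 0 by rewrite /S /dotp big1 // => i _; rewrite bz mulr0.
  by rewrite B0 expr2 !mulr0.
have Bp : 0 < B by rewrite lt_def Bpos HB0.
have H : 0 <= \sum_i (B * a i - S * b i) ^+ 2 by apply: sumr_ge0 => i _; apply: sqr_ge0.
have E : forall i, (B * a i - S * b i) ^+ 2 =
   B ^+ 2 * (a i * a i) + (- (2 * B * S)) * (a i * b i) + S ^+ 2 * (b i * b i).
  by move=> i; ring.
rewrite (eq_bigr _ (fun i _ => E i)) !big_split /= -!mulr_sumr in H.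
rewrite -/(dotp a a) -/(dotp a b) -/(dotp b b) -/A -/S -/B in H.
nra.
Qed.

Lemma bigmax_ge0 (I : finType) (G : I -> R) :
  0 <= \big[Num.max/0]_(i : I) Num.sqrt (G i).
Proof.
apply: (big_ind (fun x => 0 <= x)) => //; last by move=> i _; apply: sqrtr_ge0.
by move=> x y hx hy; rewrite le_max hx.
Qed.

Lemma sign_sq b : sign_of R b * sign_of R b = 1.
Proof. by case: b; rewrite /sign_of ?mulr1 ?mulrNN ?mulr1. Qed.

End Aux.

Section Key.
Variables (R : realType) (X Y : finType) (A : X -> Y -> R).
Variables (k : nat) (U : X -> 'I_k -> R) (V : 'I_k -> Y -> R).
Hypothesis hfac : forall x y, A x y = \sum_(i < k) U x i * V i y.
Variable lbl : seq bool -> X.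

Fixpoint build (n : nat) : seq bool * ('I_k -> R) :=
  if n is n'.+1 then
    let p := build n' in
    let b := (dotp (U (lbl p.1)) p.2 <= 0) in
    (rcons p.1 b, fun i => p.2 i + sign_of R b * U (lbl p.1) i)
  else ([::], fun _ => 0).

Definition bit (n : nat) : bool := dotp (U (lbl (build n).1)) (build n).2 <= 0.

Lemma size_build n : size (build n).1 = n.
Proof. by elim: n => //= n IH; rewrite size_rcons IH. Qed.

Lemma take_build n i : (i <= n)%N -> take i (build n).1 = (build i).1.
Proof.
elim: n => [|n IH]; first by rewrite leqn0 => /eqP ->.
rewrite leq_eqVlt => /orP [/eqP ->|]; first by rewrite -{1}(size_build n.+1) take_size.
rewrite ltnS => hi /=; rewrite -cats1 takel_cat ?IH // size_build //.
Qed.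

Lemma nth_build n i : (i < n)%N -> nth false (build n).1 i = bit i.
Proof.
elim: n => // n IH; rewrite ltnS leq_eqVlt => /orP [/eqP ->|hi] /=;
  rewrite nth_rcons size_build.
  by rewrite ltnn eqxx.
by rewrite hi IH.
Qed.

Definition r := row_norm_max U.
Definition c := col_norm_max V.

Lemma row_bound x : dotp (U x) (U x) <= r ^+ 2.
Proof.
have h1 : Num.sqrt (\sum_(i < k) U x i ^+ 2) <= r.
  exact: (le_bigmax (0:R) (fun x => Num.sqrt (\sum_(i < k) U x i ^+ 2)) x).
have h0 := sqrtr_ge0 (\sum_(i < k) U x i ^+ 2).
have hs : 0 <= \sum_(i < k) U x i ^+ 2 by apply: sumr_ge0 => i _; apply: sqr_ge0.
have e := sqr_sqrtr hs.
have -> : dotp (U x) (U x) = \sum_(i < k) U x i ^+ 2.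
  by apply: eq_bigr => i _; rewrite expr2.
nra.
Qed.

Lemma col_bound y : dotp (fun i => V i y) (fun i => V i y) <= c ^+ 2.
Proof.
have h1 : Num.sqrt (\sum_(i < k) V i y ^+ 2) <= c.
  exact: (le_bigmax (0:R) (fun y => Num.sqrt (\sum_(i < k) V i y ^+ 2)) y).
have h0 := sqrtr_ge0 (\sum_(i < k) V i y ^+ 2).
have hs : 0 <= \sum_(i < k) V i y ^+ 2 by apply: sumr_ge0 => i _; apply: sqr_ge0.
have e := sqr_sqrtr hs.
have -> : dotp (fun i => V i y) (fun i => V i y) = \sum_(i < k) V i y ^+ 2.
  by apply: eq_bigr => i _; rewrite expr2.
nra.
Qed.

Lemma norm_build n : dotp (build n).2 (build n).2 <= n%:R * r ^+ 2.
Proof.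
elim: n => [|n IH] /=.
  by rewrite /dotp big1 ?mul0r // => i _; rewrite mulr0.
set w := (build n).2; set u := U (lbl (build n).1).
set b := (dotp u w <= 0).
set s := sign_of R b.
have E : forall i, (w i + s * u i) * (w i + s * u i) =
   w i * w i + (2 * s) * (u i * w i) + (s * s) * (u i * u i) by move=> i; ring.
rewrite /dotp (eq_bigr _ (fun i _ => E i)) !big_split /= -!mulr_sumr.
rewrite -/(dotp w w) -/(dotp u w) -/(dotp u u) /s sign_sq mul1r.
have hsb : sign_of R b * dotp u w <= 0.
  rewrite /b /sign_of; case: ifP => h; first by rewrite mul1r.
  by rewrite mulN1r oppr_le0; apply: ltW; rewrite ltNge h.
have := row_bound (lbl (build n).1); rewrite -/u => hu.
rewrite -/w in IH; rewrite mulrSr; nra.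
Qed.

Lemma dot_build d y :
  (forall i, (i < d)%N -> A (lbl (take i (build d).1)) y = sign_of R (nth false (build d).1 i)) ->
  forall n, (n <= d)%N -> dotp (build n).2 (fun i => V i y) = n%:R.
Proof.
move=> hy; elim=> [|n IH] hn /=.
  by rewrite /dotp big1 // => i _; rewrite mul0r.
have hnd : (n < d)%N by [].
have := hy n hnd; rewrite (take_build (ltnW hnd)) (nth_build hnd) => hA.
rewrite /dotp.
under eq_bigr => i _ do rewrite mulrDl -mulrA.
rewrite big_split /= -mulr_sumr -hfac.
rewrite -/(dotp (build n).2 (fun i => V i y)) (IH (ltnW hnd)) hA -/(bit n).
by rewrite sign_sq mulrSr.
Qed.

Lemma key d : shatters A d lbl -> Num.sqrt (d%:R) <= r * c.
Proof.
move=> hs.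
have [y hy] := hs (build d).1 (size_build d).
have hd := dot_build hy (leqnn d).
have hcs := CS (build d).2 (fun i => V i y).
rewrite hd in hcs.
have hn := norm_build d.
have hc := col_bound y.
have r0 : 0 <= r by apply: bigmax_ge0.
have c0 : 0 <= c by apply: bigmax_ge0.
have hw0 : 0 <= dotp (build d).2 (build d).2 by apply: sumr_ge0 => i _; rewrite -expr2 sqr_ge0.
have hv0 : 0 <= dotp (fun i => V i y) (fun i => V i y) by apply: sumr_ge0 => i _; rewrite -expr2 sqr_ge0.
have hle : d%:R ^+ 2 <= d%:R * r ^+ 2 * c ^+ 2.
  by apply: (le_trans hcs); apply: ler_pM.
destruct d as [|d].
  by rewrite sqrtr0 mulr_ge0.
have dp : (0 : R) < d.+1%:R by rewrite ltr0n.
have hle' : d.+1%:R <= (r * c) ^+ 2 by nra.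
have sq := sqr_sqrtr (ltW dp).
have s0 := sqrtr_ge0 (d.+1%:R : R).
have rc0 : 0 <= r * c by apply: mulr_ge0.
nra.
Qed.

End Key.

Theorem proposition2p2 (R : realType) (X Y : finType)
  (hX : (0 < #|X|)%N) (hY : (0 < #|Y|)%N)
  (A : X -> Y -> R) (hA : forall x y, A x y = 1 \/ A x y = -1) :
  Num.sqrt ((Ldim A)%:R) <= gamma2 A.
Proof.
rewrite /gamma2; apply: lb_le_inf.
  exists (row_norm_max (fun x (i : 'I_#|Y|) => A x (enum_val i)) *
          col_norm_max (fun (i : 'I_#|Y|) y => (enum_val i == y)%:R)).
  exists #|Y|, (fun x i => A x (enum_val i)), (fun i y => (enum_val i == y)%:R).
  split => // x y.
  rewrite -(big_enum_val (fun z => A x z * (z == y)%:R)) /=.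
  rewrite (bigD1 y) //= eqxx mulr1 big1 ?addr0 // => z /negbTE ->.
  by rewrite mulr0.
move=> z [k [U [V [hf ->]]]].
rewrite /Ldim.
apply: (big_ind (fun n : nat => Num.sqrt (n%:R) <= row_norm_max U * col_norm_max V)).
- by rewrite sqrtr0 mulr_ge0 // bigmax_ge0.
- move=> a b ha hb.
  change (Num.sqrt ((maxn a b)%:R) <= row_norm_max U * col_norm_max V).
  by case: (leqP a b).
- move=> i /asboolP [lbl hl].
  exact: (key hf hl).
Qed.
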